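(* Let $\mathcal{I}$ be an $F_\sigma$ ideal on $\mathbb{N}$. Then (i) $\mathcal{I}$ is uniformly $p^+$; (ii) if $\mathcal{I}$ is $q^+$, then $\mathcal{I}$ is uniformly $q^+$. In particular, every selective $F_\sigma$ ideal is uniformly selective.
   Context: Subsets of $\mathbb{N}$ are identified with elements of $2^{\mathbb{N}}$. An ideal on $\mathbb{N}$ is a hereditary family closed under finite unions; it is $F_\sigma$ if it is an $F_\sigma$ subset of $2^{\mathbb{N}}$; $\mathcal{I}^+=2^{\mathbb{N}}\setminus\mathcal{I}$. For $x\subseteq\mathbb{N}$, $x/n=\{m\in x:m>n\}$. $\mathcal{I}$ is $q^+$ if for every $x\in\mathcal{I}^+$ and every partition $(s_n)_{n}$ of $x$ into finite sets there is $y\subseteq x$ with $y\in\mathcal{I}^+$ and $|y\cap s_n|\le 1$ for all $n$. $\mathcal{I}$ is selective if for every $\subseteq$-decreasing sequence $(x_n)_n$ in $\mathcal{I}^+$ there is $x\in\mathcal{I}^+$ with $x/n\subseteq x_n$ for all $n\in x$. $\mathcal{I}$ is uniformly $p^+$ if there is a Borel $G:(2^{\mathbb{N}})^{\mathbb{N}}\to2^{\mathbb{N}}$ such that for every decreasing sequence $(x_n)_n$ in $\mathcal{I}^+$, $G((x_n)_n)\in\mathcal{I}^+$ and $G((x_n)_n)\setminus x_n$ is finite for all $n$. $\mathcal{I}$ is uniformly $q^+$ if there is a Borel $F:2^{\mathbb{N}}\times([\mathbb{N}]^{<\omega})^{\mathbb{N}}\to2^{\mathbb{N}}$ such that whenever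 $x\in\mathcal{I}^+$ and $(s_n)_n$ is a partition of $x$ into finite sets, $y=F(x,(s_n)_n)$ satisfies $y\subseteq x$, $y\in\mathcal{I}^+$ and $|y\cap s_n|\le1$ for all $n$. $\mathcal{I}$ is uniformly selective if there is a Borel $H:(2^{\mathbb{N}})^{\mathbb{N}}\to2^{\mathbb{N}}$ such that for every decreasing sequence $(x_n)_n$ in $\mathcal{I}^+$, $x=H((x_n)_n)\in\mathcal{I}^+$ and $x/n\subseteq x_n$ for all $n\in x$. *)

(* Defs.v *)
From Stdlib Require Import Arith Bool.
Open Scope bool_scope.

Definition cantor := nat -> bool.
Definition cantor_seq := nat -> cantor.

Inductive sigma_gen {X : Type} (G : (X -> Prop) -> Prop) : (X -> Prop) -> Prop :=
  | sg_base A : G A -> sigma_gen G A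
  | sg_compl A : sigma_gen G A -> sigma_gen G (fun x => ~ A x)
  | sg_union (A : nat -> X -> Prop) :
      (forall n, sigma_gen G (A n)) -> sigma_gen G (fun x => exists n, A n x)
  | sg_ext A B : (forall x, A x <-> B x) -> sigma_gen G A -> sigma_gen G B.

Definition borel_fun {X Y : Type} (GX : (X -> Prop) -> Prop)
    (GY : (Y -> Prop) -> Prop) (f : X -> Y) : Prop :=
  forall B, sigma_gen GY B -> sigma_gen GX (fun x => B (f x)).

(* Subbasic clopen sets generating the Borel sets of the product topologies. *)
Definition cantor_gen (A : cantor -> Prop) : Prop :=
  exists n, A = (fun x => x n = true).
Definition cantor_seq_gen (A : cantor_seq -> Prop) : Prop :=
  exists m n, A = (fun X => X m n = true).
Definition cantor_pair_gen (A : cantor * cantor_seq -> Prop) : Prop :=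
  (exists n, A = (fun p => fst p n = true)) \/
  (exists m n, A = (fun p => snd p m n = true)).

Definition cantor_open (U : cantor -> Prop) : Prop :=
  forall x, U x -> exists N, forall y, (forall k, k < N -> y k = x k) -> U y.
Definition cantor_closed (C : cantor -> Prop) : Prop :=
  cantor_open (fun x => ~ C x).
Definition F_sigma (P : cantor -> Prop) : Prop :=
  exists C : nat -> cantor -> Prop,
    (forall n, cantor_closed (C n)) /\ (forall x, P x <-> exists n, C n x).

Definition subset (x y : cantor) : Prop := forall k, x k = true -> y k = true.
Definition finite_set (x : cantor) : Prop := exists N, forall k, x k = true -> k < N.
Definition set_diff (x y : cantor) : cantor := fun k => x k && negb (y k).

Definition is_ideal (I : cantor -> Prop) : Prop :=
  (forall x y, I x -> subset y x -> I y) /\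
  (forall x y, I x -> I y -> I (fun k => x k || y k)).

Definition positive (I : cantor -> Prop) (x : cantor) : Prop := ~ I x.

Definition decreasing (X : cantor_seq) : Prop := forall n, subset (X (S n)) (X n).

(* (s_n) is a partition of x into finite sets (empty pieces allowed) *)
Definition finite_partition (x : cantor) (s : cantor_seq) : Prop :=
  (forall n, finite_set (s n)) /\
  (forall n m k, n <> m -> s n k = true -> s m k = true -> False) /\
  (forall k, x k = true <-> exists n, s n k = true).

Definition selector (y : cantor) (s : cantor_seq) : Prop :=
  forall n a b, y a = true -> s n a = true -> y b = true -> s n b = true -> a = b.

Definition diagonalizes (x : cantor) (X : cantor_seq) : Prop :=
  forall n, x n = true -> forall m, n < m -> x m = true -> X n m = true.

Definition qplus (I : cantor -> Prop) : Prop :=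
  forall x s, positive I x -> finite_partition x s ->
    exists y, subset y x /\ positive I y /\ selector y s.

Definition selective (I : cantor -> Prop) : Prop :=
  forall X : cantor_seq, decreasing X -> (forall n, positive I (X n)) ->
    exists x, positive I x /\ diagonalizes x X.

Definition uniformly_pplus (I : cantor -> Prop) : Prop :=
  exists G : cantor_seq -> cantor, borel_fun cantor_seq_gen cantor_gen G /\
    forall X, decreasing X -> (forall n, positive I (X n)) ->
      positive I (G X) /\ forall n, finite_set (set_diff (G X) (X n)).

Definition uniformly_qplus (I : cantor -> Prop) : Prop :=
  exists F : cantor * cantor_seq -> cantor,
    borel_fun cantor_pair_gen cantor_gen F /\
    forall x s, positive I x -> finite_partition x s ->
      subset (F (x, s)) x /\ positive I (F (x, s)) /\ selector (F (x, s)) s.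

Definition uniformly_selective (I : cantor -> Prop) : Prop :=
  exists H : cantor_seq -> cantor, borel_fun cantor_seq_gen cantor_gen H /\
    forall X, decreasing X -> (forall n, positive I (X n)) ->
      positive I (H X) /\ diagonalizes (H X) X.

(* Main.v *)
Require Import Defs.
From Stdlib Require Import Arith Lia Bool Classical ClassicalEpsilon.

Definition dec (P : Prop) : bool := if excluded_middle_informative P then true else false.
Lemma dec_true (P : Prop) : dec P = true <-> P.
Proof. unfold dec; destruct (excluded_middle_informative P); split; intros; try tauto; discriminate. Qed.

Definition setc (c : nat) : cantor := fun k => Nat.testbit c k.

Lemma setc_bound c k : Nat.testbit c k = true -> k < S (Nat.log2 c).
Proof.
  intros H. destruct (le_lt_dec (S (Nat.log2 c)) k) as [h|h]; [|exact h].
  rewrite Nat.bits_above_log2 in H by lia. discriminate.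
Qed.

Lemma code_exists (w : cantor) (m : nat) :
  exists c, forall k, Nat.testbit c k = ((k <? m) && w k).
Proof.
  induction m as [|m [c Hc]].
  - exists 0. intros k. rewrite Nat.bits_0. reflexivity.
  - destruct (w m) eqn:Hw.
    + exists (Nat.lor c (2 ^ m)). intros k. rewrite Nat.lor_spec, Hc, Nat.pow2_bits_eqb.
      destruct (Nat.eqb_spec m k).
      * subst. rewrite Hw. rewrite (proj2 (Nat.ltb_lt k (S k))) by lia. now rewrite orb_true_r.
      * rewrite orb_false_r. destruct (Nat.ltb_spec k m), (Nat.ltb_spec k (S m)); try lia; reflexivity.
    + exists c. intros k. rewrite Hc. destruct (Nat.eqb_spec k m).
      * subst. rewrite Hw. now rewrite !andb_false_r.
      * destruct (Nat.ltb_spec k m), (Nat.ltb_spec k (S m)); try lia; reflexivity.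
Qed.

Lemma ex_least (Q : nat -> Prop) : (exists c, Q c) -> exists c, Q c /\ forall c', c' < c -> ~ Q c'.
Proof.
  intros [c Hc]. revert Hc. induction c as [c IH] using lt_wf_ind. intros Hc.
  destruct (classic (exists c', c' < c /\ Q c')) as [[c' [h1 h2]]|h].
  - exact (IH c' h1 h2).
  - exists c. split; auto. intros c' h1 h2. apply h; eauto.
Qed.

Lemma least_unique (Q : nat -> Prop) a b :
  Q a -> (forall c', c' < a -> ~ Q c') -> Q b -> (forall c', c' < b -> ~ Q c') -> a = b.
Proof.
  intros. destruct (lt_eq_lt_dec a b) as [[h|h]|h]; auto.
  - exfalso; eapply H2; eauto.
  - exfalso; eapply H0; eauto.
Qed.

Section Meas.
Variable P : Type.
Variable G : (P -> Prop) -> Prop.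
Variable A0 : P -> Prop.
Hypothesis HA0 : G A0.

Lemma meas_not Q : sigma_gen G Q -> sigma_gen G (fun p => ~ Q p).
Proof. apply sg_compl. Qed.

Lemma meas_ex (Q : nat -> P -> Prop) : (forall n, sigma_gen G (Q n)) -> sigma_gen G (fun p => exists n, Q n p).
Proof. apply sg_union. Qed.

Lemma meas_or Q1 Q2 : sigma_gen G Q1 -> sigma_gen G Q2 -> sigma_gen G (fun p => Q1 p \/ Q2 p).
Proof.
  intros h1 h2. apply (sg_ext _ (fun p => exists n, (match n with 0 => Q1 | _ => Q2 end) p)).
  - intros p; split. intros [[|n] h]; auto. intros [h|h]; [exists 0 | exists 1]; auto.
  - apply sg_union. intros [|n]; auto.
Qed.

Lemma meas_and Q1 Q2 : sigma_gen G Q1 -> sigma_gen G Q2 -> sigma_gen G (fun p => Q1 p /\ Q2 p).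
Proof.
  intros h1 h2. apply (sg_ext _ (fun p => ~ (~ Q1 p \/ ~ Q2 p))).
  - intros p; tauto.
  - apply sg_compl, meas_or; apply sg_compl; auto.
Qed.

Lemma meas_imp Q1 Q2 : sigma_gen G Q1 -> sigma_gen G Q2 -> sigma_gen G (fun p => Q1 p -> Q2 p).
Proof.
  intros h1 h2. apply (sg_ext _ (fun p => ~ Q1 p \/ Q2 p)).
  - intros p; tauto.
  - apply meas_or; auto. apply sg_compl; auto.
Qed.

Lemma meas_all (Q : nat -> P -> Prop) : (forall n, sigma_gen G (Q n)) -> sigma_gen G (fun p => forall n, Q n p).
Proof.
  intros h. apply (sg_ext _ (fun p => ~ exists n, ~ Q n p)).
  - intros p; split. intros H n. apply NNPP. intros H'. apply H; eauto.
    intros H [n Hn]. auto.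
  - apply sg_compl, sg_union. intros n. apply sg_compl; auto.
Qed.

Lemma meas_const (R : Prop) : sigma_gen G (fun _ => R).
Proof.
  destruct (classic R) as [r|r].
  - apply (sg_ext _ (fun p => A0 p \/ ~ A0 p)). intros p; tauto.
    apply meas_or. apply sg_base; auto. apply sg_compl, sg_base; auto.
  - apply (sg_ext _ (fun p => ~ (A0 p \/ ~ A0 p))). intros p; tauto.
    apply sg_compl, meas_or. apply sg_base; auto. apply sg_compl, sg_base; auto.
Qed.
End Meas.

Ltac meas_step :=
  match goal with
  | |- sigma_gen _ (fun _ => ?R) => eapply meas_const; eassumption
  | |- sigma_gen _ (fun p => forall n : nat, _) => apply meas_all; intro
  | |- sigma_gen _ (fun p => exists n : nat, _) => apply meas_ex; intro
  | |- sigma_gen _ (fun p => _ /\ _) => apply meas_and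
  | |- sigma_gen _ (fun p => _ \/ _) => apply meas_or
  | |- sigma_gen _ (fun p => ~ _) => apply meas_not
  | |- sigma_gen _ (fun p => _ -> _) => apply meas_imp
  end.

Lemma borel_coords {P : Type} (G : (P -> Prop) -> Prop) (f : P -> cantor) :
  (forall k, sigma_gen G (fun p => f p k = true)) -> borel_fun G cantor_gen f.
Proof.
  intros H B HB. induction HB.
  - destruct H0 as [n ->]. apply H.
  - apply sg_compl; auto.
  - apply sg_union; auto.
  - apply (sg_ext _ (fun x => A (f x))); auto.
Qed.


Section Stage.
Variable P : Type.
Variable Cond : nat -> P -> nat -> nat -> Prop.

Definition least_of {Q : nat -> Prop} (H : exists c, Q c) : nat :=
  proj1_sig (constructive_indefinite_description _ (ex_least Q H)).
Lemma least_of_spec Q (H : exists c, Q c) : Q (least_of H) /\ forall c', c' < least_of H -> ~ Q c'.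
Proof. unfold least_of. destruct (constructive_indefinite_description _ _) as [c Hc]. exact Hc. Qed.

Definition choose (j : nat) (p : P) (u : nat) : nat :=
  match excluded_middle_informative (exists c, Cond j p u c) with
  | left H => least_of H
  | right _ => 0 end.

Lemma choose_spec j p u : (exists c, Cond j p u c) -> Cond j p u (choose j p u).
Proof. intros H. unfold choose. destruct (excluded_middle_informative _) as [H'|H'].
  apply least_of_spec. contradiction. Qed.

Lemma choose_eq_iff j p u w : choose j p u = w <->
  ((exists c, Cond j p u c) /\ Cond j p u w /\ forall c', c' < w -> ~ Cond j p u c') \/
  (~ (exists c, Cond j p u c) /\ w = 0).
Proof.
  unfold choose. destruct (excluded_middle_informative _) as [H|H].
  - destruct (least_of_spec _ H) as [h1 h2]. split.
    + intros <-. left; auto.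
    + intros [[_ [h3 h4]]|[h3 _]]; [|contradiction]. eapply least_unique; eauto.
  - split. intros <-; right; auto. intros [[h _]|[_ h]]; auto; contradiction.
Qed.

Fixpoint stage (p : P) (j : nat) : nat :=
  match j with 0 => 0 | S j => Nat.lor (stage p j) (choose j p (stage p j)) end.

Definition out (p : P) : cantor := fun k => dec (exists j, Nat.testbit (stage p j) k = true).

Definition piece (p : P) (i : nat) : cantor := setc (choose i p (stage p i)).

Lemma stage_bits p j k : Nat.testbit (stage p j) k = true <-> exists i, i < j /\ piece p i k = true.
Proof.
  unfold piece, setc. induction j; simpl.
  - rewrite Nat.bits_0. split. discriminate. intros [i [h _]]; lia.
  - rewrite Nat.lor_spec, orb_true_iff, IHj. split.
    + intros [[i [h1 h2]]|h]. exists i; split; auto; lia. exists j; auto.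
    + intros [i [h1 h2]]. destruct (Nat.eq_dec i j). subst; auto. left; exists i; split; auto; lia.
Qed.

Lemma out_iff p k : out p k = true <-> exists i, piece p i k = true.
Proof.
  unfold out. rewrite dec_true. split.
  - intros [j Hj]. apply stage_bits in Hj. destruct Hj as [i [_ h]]; eauto.
  - intros [i h]. exists (S i). apply stage_bits. exists i; auto.
Qed.

Section M.
Variable G : (P -> Prop) -> Prop.
Variable A0 : P -> Prop.
Hypothesis HA0 : G A0.
Hypothesis HC : forall j u c, sigma_gen G (fun p => Cond j p u c).

Lemma meas_choose j u w : sigma_gen G (fun p => choose j p u = w).
Proof.
  apply (sg_ext _ (fun p => ((exists c, Cond j p u c) /\ Cond j p u w /\ forall c', c' < w -> ~ Cond j p u c') \/
  (~ (exists c, Cond j p u c) /\ w = 0))).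
  - intros p. symmetry. apply choose_eq_iff.
  - repeat (meas_step || apply HC || eassumption).
Qed.

Lemma meas_stage j : forall u, sigma_gen G (fun p => stage p j = u).
Proof.
  induction j; intros u; simpl.
  - eapply meas_const; eauto.
  - apply (sg_ext _ (fun p => exists v w, stage p j = v /\ choose j p v = w /\ Nat.lor v w = u)).
    + intros p; split. intros [v [w [-> [-> ->]]]]; auto. intros <-; eauto.
    + repeat (meas_step || apply IHj || apply meas_choose || eassumption).
Qed.

Lemma borel_out : borel_fun G cantor_gen out.
Proof.
  apply borel_coords. intros k.
  apply (sg_ext _ (fun p => exists j v, stage p j = v /\ Nat.testbit v k = true)).
  - intros p. unfold out. rewrite dec_true. split. intros [j [v [e h]]]; subst v; eauto. intros [j h]; eauto.
  - repeat (meas_step || apply meas_stage || eassumption).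
Qed.
End M.



Lemma piece_cond p : (forall j u, exists c, Cond j p u c) -> forall i, Cond i p (stage p i) (choose i p (stage p i)).
Proof. intros H i. apply choose_spec, H. Qed.
End Stage.


Definition upd (p : cantor) (L : nat) (b : bool) : cantor := fun k => if k =? L then b else p k.

Section Compact.
Variable C : cantor -> Prop.
Hypothesis HC : cantor_closed C.
Variable y : cantor.
Hypothesis Hy : forall m, exists z, C z /\ forall k, k < m -> y k = true -> z k = true.

Definition Good (p : cantor) (L : nat) : Prop :=
  forall M, exists z, C z /\ (forall k, k < L -> z k = p k) /\ (forall k, k < M -> y k = true -> z k = true).

Lemma Good0 p : Good p 0.
Proof. intros M. destruct (Hy M) as [z [h1 h2]]. exists z; repeat split; auto; intros; lia. Qed.

Lemma Good_step p L : Good p L -> Good (upd p L true) (S L) \/ Good (upd p L false) (S L).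
Proof.
  intros H. apply NNPP; intros Hn. apply not_or_and in Hn. destruct Hn as [h1 h0].
  apply not_all_ex_not in h1. apply not_all_ex_not in h0.
  destruct h1 as [M1 h1], h0 as [M0 h0].
  destruct (H (max M0 M1)) as [z [hz1 [hz2 hz3]]].
  assert (Hb : forall b, z L = b -> exists z', C z' /\ (forall k, k < S L -> z' k = upd p L b k) /\ (forall k, k < max M0 M1 -> y k = true -> z' k = true)).
  { intros b hb. exists z. repeat split; auto. intros k hk. unfold upd. destruct (Nat.eqb_spec k L). subst; auto. apply hz2; lia. }
  destruct (z L) eqn:e.
  - apply h1. destruct (Hb true eq_refl) as [z' [a [b c]]]. exists z'. repeat split; auto. intros; apply c; auto; lia.
  - apply h0. destruct (Hb false eq_refl) as [z' [a [b c]]]. exists z'. repeat split; auto. intros; apply c; auto; lia.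
Qed.

Fixpoint pre (L : nat) : cantor :=
  match L with 0 => fun _ => false
  | S L => if excluded_middle_informative (Good (upd (pre L) L true) (S L)) then upd (pre L) L true else upd (pre L) L false end.

Lemma pre_good L : Good (pre L) L.
Proof.
  induction L; simpl. apply Good0.
  destruct (excluded_middle_informative _); auto.
  destruct (Good_step _ _ IHL); auto; contradiction.
Qed.


Lemma Good_ext p q L : (forall k, k < L -> p k = q k) -> Good p L -> Good q L.
Proof. intros e H M. destruct (H M) as [z [a [b c]]]. exists z; repeat split; auto. intros; rewrite b, e; auto. Qed.

Lemma pre_agree L L' : L <= L' -> forall k, k < L -> pre L' k = pre L k.
Proof.
  induction 1; auto. intros k hk. simpl.
  assert (hm : pre m k = pre L k) by auto. rewrite <- hm.
  destruct (excluded_middle_informative (Good (upd (pre m) m true) (S m))); unfold upd;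
   destruct (Nat.eqb_spec k m); auto; lia.
Qed.

Definition zs : cantor := fun k => pre (S k) k.

Lemma zs_good L : Good zs L.
Proof. apply (Good_ext (pre L)). intros k hk. unfold zs. apply pre_agree; lia. apply pre_good. Qed.

Lemma compact : exists z, C z /\ subset y z.
Proof.
  exists zs. split.
  - apply NNPP; intros hn. destruct (HC zs hn) as [N hN].
    destruct (zs_good N 0) as [z [a [b _]]]. exact (hN z b a).
  - intros k hk. destruct (zs_good (S k) (S k)) as [z [a [b c]]].
    rewrite <- b by lia. apply c; auto.
Qed.
End Compact.

Lemma closed_or A B : cantor_closed A -> cantor_closed B -> cantor_closed (fun x => A x \/ B x).
Proof.
  intros hA hB x hx. destruct (hA x) as [N1 h1]. tauto. destruct (hB x) as [N2 h2]. tauto.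
  exists (max N1 N2). intros y hy [h|h]. apply (h1 y); auto; intros; apply hy; lia. apply (h2 y); auto; intros; apply hy; lia.
Qed.

Lemma closed_ext A B : (forall x, A x <-> B x) -> cantor_closed A -> cantor_closed B.
Proof. intros e hA x hx. destruct (hA x) as [N h]. rewrite e; auto. exists N. intros y hy; rewrite <- e; auto. Qed.

Section Ideal.
Variable I : cantor -> Prop.
Variable Cs : nat -> cantor -> Prop.
Hypothesis Hcl : forall n, cantor_closed (Cs n).
Hypothesis HIC : forall x, I x <-> exists n, Cs n x.
Hypothesis Hher : forall x y, I x -> subset y x -> I y.

Definition E (j : nat) (z : cantor) : Prop := exists i, i <= j /\ Cs i z.
Definition NotD (j : nat) (w : cantor) : Prop := ~ exists z, E j z /\ subset w z.

Lemma E_closed j : cantor_closed (E j).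
Proof.
  induction j.
  - apply (closed_ext (Cs 0)); auto. intros x; split. intros h; exists 0; auto. intros [i [h1 h2]]. replace i with 0 in h2 by lia. auto.
  - apply (closed_ext (fun x => E j x \/ Cs (S j) x)). intros x; split.
    + intros [[i [h1 h2]]|h]. exists i; split; auto. exists (S j); auto.
    + intros [i [h1 h2]]. destruct (Nat.eq_dec i (S j)). subst; auto. left; exists i; split; auto; lia.
    + apply closed_or; auto.
Qed.

Lemma NotD_ext j w w' : (forall k, w k = w' k) -> NotD j w -> NotD j w'.
Proof. intros e h [z [a b]]. apply h. exists z; split; auto. intros k hk; apply b; rewrite <- e; auto. Qed.

Lemma NotD_sub j w w' : subset w w' -> NotD j w -> NotD j w'.
Proof. intros e h [z [a b]]. apply h. exists z; split; auto. intros k hk; apply b; auto. Qed.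

Lemma bad_prefix y : ~ I y -> forall j, exists m, NotD j (fun k => (k <? m) && y k).
Proof.
  intros hy j. apply NNPP; intros hn.
  assert (H : forall m, exists z, E j z /\ forall k, k < m -> y k = true -> z k = true).
  { intros m. apply NNPP; intros h. apply hn. exists m. intros [z [a b]]. apply h. exists z; split; auto.
    intros k hk hk'. apply b. apply andb_true_intro; split; auto. apply Nat.ltb_lt; auto. }
  destruct (compact _ (E_closed j) y H) as [z [[i [_ hz]] hs]].
  apply hy. apply (Hher z); auto. apply HIC; eauto.
Qed.

Lemma bad_code y : ~ I y -> forall j, exists c, NotD j (setc c) /\ subset (setc c) y.
Proof.
  intros hy j. destruct (bad_prefix y hy j) as [m hm]. destruct (code_exists y m) as [c hc].
  exists c. split. apply (NotD_ext _ (fun k => (k <? m) && y k)); auto. intros; unfold setc; auto.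
  intros k. unfold setc. rewrite hc. intros h. apply andb_prop in h; tauto.
Qed.

Lemma pos_of_pieces (y : cantor) (F : nat -> cantor) :
  (forall j, subset (F j) y) -> (forall j, NotD j (F j)) -> ~ I y.
Proof.
  intros h1 h2 hy. apply HIC in hy. destruct hy as [n hn]. apply (h2 n). exists y. split; auto. exists n; auto.
Qed.
End Ideal.


Lemma dec_le (X : cantor_seq) : decreasing X -> forall n m, n <= m -> subset (X m) (X n).
Proof. intros H n m h. induction h. intros k; auto. intros k hk. apply IHh, H, hk. Qed.

Lemma seq_atom j k : sigma_gen cantor_seq_gen (fun X : cantor_seq => X j k = true).
Proof. apply sg_base. exists j, k. reflexivity. Qed.

Lemma seq_A0 : cantor_seq_gen (fun X => X 0 0 = true).
Proof. exists 0, 0. reflexivity. Qed.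

Section Main.
Variable I : cantor -> Prop.
Variable Cs : nat -> cantor -> Prop.
Hypothesis Hcl : forall n, cantor_closed (Cs n).
Hypothesis HIC : forall x, I x <-> exists n, Cs n x.
Hypothesis Hher : forall x y, I x -> subset y x -> I y.
Hypothesis Hun : forall x y, I x -> I y -> I (fun k => x k || y k).

Definition Cond1 (j : nat) (X : cantor_seq) (u c : nat) : Prop :=
  (forall k, Nat.testbit c k = true -> X j k = true) /\ NotD Cs j (setc c).

Lemma part1 : uniformly_pplus I.
Proof.
  exists (out _ Cond1). split.
  - apply (borel_out _ _ _ _ seq_A0). intros j u c. unfold Cond1.
    repeat (meas_step || apply seq_atom || (eapply meas_const; apply seq_A0)).
  - intros X Hd Hp.
    assert (Hpc : forall i, Cond1 i X (stage _ Cond1 X i) (choose _ Cond1 i X (stage _ Cond1 X i))).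
    { apply piece_cond. intros j u. destruct (bad_code I Cs Hcl HIC Hher (X j) (Hp j) j) as [c [h1 h2]].
      exists c. split; auto. }
    split.
    + apply (pos_of_pieces I Cs HIC _ (piece _ Cond1 X)).
      * intros j k hk. apply out_iff. eauto.
      * intros j. apply Hpc.
    + intros n. exists (S (Nat.log2 (stage _ Cond1 X n))). intros k hk.
      unfold set_diff in hk. apply andb_prop in hk. destruct hk as [h1 h2].
      apply out_iff in h1. destruct h1 as [i hi].
      destruct (le_lt_dec n i) as [l|l].
      * exfalso. assert (X n k = true). { apply (dec_le X Hd n i l). apply (Hpc i). exact hi. }
        rewrite H in h2; discriminate.
      * apply setc_bound. apply stage_bits. eauto.
Qed.

Definition single (a : nat) : cantor := fun k => Nat.eqb k a.

Lemma fin_I (x : cantor) : (forall a, x a = true -> I (single a)) -> I (fun _ => false) ->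
  forall N w, subset w x -> (forall k, w k = true -> k < N) -> I w.
Proof.
  intros hs h0 N. induction N; intros w hw hb.
  - apply (Hher _ _ h0). intros k hk. specialize (hb k hk). lia.
  - destruct (x N) eqn:eN.
    + apply (Hher (fun k => (fun k => (k <? N) && w k) k || single N k)).
      * apply Hun; auto. apply IHN. intros k hk; apply andb_prop in hk; apply hw; tauto.
        intros k hk; apply andb_prop in hk; destruct hk as [hk _]; apply Nat.ltb_lt; auto.
      * intros k hk. specialize (hb k hk). unfold single. destruct (Nat.eqb_spec k N). now rewrite orb_true_r.
        rewrite hk, andb_true_r, orb_false_r. apply Nat.ltb_lt. lia.
    + apply IHN; auto. intros k hk. specialize (hb k hk). destruct (Nat.eq_dec k N). subst. rewrite (hw _ hk) in eN; discriminate. lia.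
Qed.

Lemma pos_minus x z w : ~ I x -> (forall k, x k = true -> z k = true \/ w k = true) -> I w -> ~ I z.
Proof.
  intros hx h hw hz. apply hx. apply (Hher _ _ (Hun _ _ hz hw)). intros k hk. apply orb_true_iff; auto.
Qed.

Lemma pos_transfer y F : ~ I y -> subset y F -> ~ I F.
Proof. intros h1 h2 h3. apply h1. eapply Hher; eauto. Qed.

Definition Cond3 (j : nat) (X : cantor_seq) (u c : nat) : Prop :=
  (forall a b, Nat.testbit u a = true -> Nat.testbit c b = true -> a < b) /\
  (forall n m, (Nat.testbit u n = true \/ Nat.testbit c n = true) -> Nat.testbit c m = true -> n < m -> X n m = true) /\
  NotD Cs j (setc c).

Lemma part3 : selective I -> uniformly_selective I.
Proof.
  intros Hsel.
  destruct (classic (exists a, ~ I (single a))) as [[a ha]|hA].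
  - exists (fun _ => single a). split.
    + apply borel_coords. intros k. eapply meas_const. apply seq_A0.
    + intros X _ _. split; auto. intros n hn m hnm hm. unfold single in *.
      apply Nat.eqb_eq in hn, hm. lia.
  - assert (hs : forall a, I (single a)). { intros a. apply NNPP. intros h. apply hA; eauto. }
    assert (h0 : I (fun _ => false)). { apply (Hher _ _ (hs 0)). intros k hk; discriminate. }
    assert (fin : forall N w, (forall k, w k = true -> k < N) -> I w).
    { intros N w hb. apply (fin_I (fun _ => true) (fun a _ => hs a) h0 N); auto. intros k _; auto. }
    exists (out _ Cond3). split.
    + apply (borel_out _ _ _ _ seq_A0). intros j u c. unfold Cond3.
      repeat (meas_step || apply seq_atom || (eapply meas_const; apply seq_A0)).
    + intros X Hd Hp.
      assert (Hpc : forall i, Cond3 i X (stage _ Cond3 X i) (choose _ Cond3 i X (stage _ Cond3 X i))).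
      { apply piece_cond. intros j u.
        set (M := S (Nat.log2 u)).
        set (z := fun n k => (M <=? k) && X (max n M) k).
        assert (zd : decreasing z).
        { intros n k hk. unfold z in *. apply andb_prop in hk. destruct hk as [h1 h2].
          rewrite h1. simpl. apply (dec_le X Hd (max n M) (max (S n) M)); auto. lia. }
        assert (zp : forall n, positive I (z n)).
        { intros n. apply (pos_minus (X (max n M)) _ (fun k => k <? M)); [apply Hp| |].
          - intros k hk. unfold z. rewrite hk, andb_true_r. destruct (Nat.leb_spec M k); [left|right]; auto.
            apply Nat.ltb_lt; auto.
          - apply (fin M). intros k hk. apply Nat.ltb_lt; auto. }
        destruct (Hsel z zd zp) as [w [hw hdiag]].
        destruct (classic (exists m0, w m0 = true)) as [[m0 hm0]|hne].
        2:{ exfalso. apply hw. apply (fin 0). intros k hk. exfalso; eauto. }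
        set (w' := fun k => (m0 <? k) && w k).
        assert (hw' : ~ I w').
        { apply (pos_minus w _ (fun k => k <? S m0)); [apply hw| |].
          - intros k hk. unfold w'. rewrite hk, andb_true_r. destruct (Nat.ltb_spec m0 k); [left|right]; auto.
            apply Nat.ltb_lt; lia.
          - apply (fin (S m0)). intros k hk. apply Nat.ltb_lt; auto. }
        destruct (bad_code I Cs Hcl HIC Hher w' hw' j) as [c [hc1 hc2]].
        assert (inw : forall m, Nat.testbit c m = true -> m0 < m /\ w m = true /\ M <= m /\ X (max m0 M) m = true).
        { intros m hm. specialize (hc2 m hm). unfold w' in hc2. apply andb_prop in hc2. destruct hc2 as [e1 e2].
          apply Nat.ltb_lt in e1. specialize (hdiag m0 hm0 m e1 e2). unfold z in hdiag.
          apply andb_prop in hdiag. destruct hdiag as [d1 d2]. apply Nat.leb_le in d1. auto. }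
        exists c. split; [|split]; auto.
        - intros a b ha hb. apply setc_bound in ha. destruct (inw b hb) as [_ [_ [h _]]]. unfold M in h. lia.
        - intros n m [hn|hn] hm hnm; destruct (inw m hm) as [e1 [e2 [e3 e4]]].
          + apply setc_bound in hn. apply (dec_le X Hd n (max m0 M)); auto. unfold M in e3. lia.
          + destruct (inw n hn) as [_ [f2 _]]. specialize (hdiag n f2 m hnm e2). unfold z in hdiag.
            apply andb_prop in hdiag. destruct hdiag as [_ d]. apply (dec_le X Hd n (max n M)); auto. lia. }
      split.
      * apply (pos_of_pieces I Cs HIC _ (piece _ Cond3 X)).
        -- intros j k hk. apply out_iff. eauto.
        -- intros j. apply Hpc.
      * intros n hn m hnm hm. apply out_iff in hn, hm. destruct hn as [i hi], hm as [j hj].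
        destruct (lt_eq_lt_dec i j) as [[l|l]|l].
        -- apply (Hpc j); auto. left. apply stage_bits. eauto.
        -- subst. apply (Hpc j); auto.
        -- exfalso. destruct (Hpc i) as [ha _]. specialize (ha m n). 
           assert (m < n). { apply ha; auto. apply stage_bits. eauto. } lia.
Qed.

Definition Pt := (cantor * cantor_seq)%type.

Lemma pair_atom1 k : sigma_gen cantor_pair_gen (fun p : Pt => fst p k = true).
Proof. apply sg_base. left. exists k. reflexivity. Qed.
Lemma pair_atom2 n k : sigma_gen cantor_pair_gen (fun p : Pt => snd p n k = true).
Proof. apply sg_base. right. exists n, k. reflexivity. Qed.
Lemma pair_A0 : cantor_pair_gen (fun p : Pt => fst p 0 = true).
Proof. left. exists 0. reflexivity. Qed.

Definition Cond2 (j : nat) (p : Pt) (u c : nat) : Prop :=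
  (forall k, Nat.testbit c k = true -> fst p k = true) /\
  (forall n a b, Nat.testbit c a = true -> snd p n a = true -> Nat.testbit c b = true -> snd p n b = true -> a = b) /\
  (forall n, (exists i, Nat.testbit u i = true /\ snd p n i = true) -> forall k, Nat.testbit c k = true -> snd p n k = true -> False) /\
  NotD Cs j (setc c).

Definition F2 (p : Pt) : cantor := fun k =>
  dec ((fst p k = true /\ ~ I (single k) /\ forall a, a < k -> ~ (fst p a = true /\ ~ I (single a))) \/
       ((forall a, fst p a = true -> I (single a)) /\ out _ Cond2 p k = true)).

Lemma piece_bound (x : cantor) (s : cantor_seq) : finite_partition x s ->
  forall N, exists B, forall i n k, i < N -> s n i = true -> s n k = true -> k < B.
Proof.
  intros [hf [hd _]] N. induction N as [|N [B hB]].
  - exists 0. intros; lia.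
  - destruct (classic (exists n, s n N = true)) as [[n0 hn0]|hno].
    + destruct (hf n0) as [b hb]. exists (max B b). intros i n k hi h1 h2.
      destruct (Nat.eq_dec i N).
      * subst. destruct (Nat.eq_dec n n0). subst. specialize (hb k h2). lia.
        exfalso. eapply hd; eauto.
      * specialize (hB i n k ltac:(lia) h1 h2). lia.
    + exists B. intros i n k hi h1 h2. destruct (Nat.eq_dec i N). subst. exfalso; eauto.
      apply (hB i n k); auto. lia.
Qed.

Lemma meas_cond2 j u c : sigma_gen cantor_pair_gen (fun p => Cond2 j p u c).
Proof. unfold Cond2.
  repeat (meas_step || apply pair_atom1 || apply pair_atom2 || (eapply meas_const; apply pair_A0)).
Qed.

Lemma part2 : qplus I -> uniformly_qplus I.
Proof.
  intros Hq. exists F2. split.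
  - apply borel_coords. intros k.
    apply (sg_ext _ (fun p : Pt => (fst p k = true /\ ~ I (single k) /\ forall a, a < k -> ~ (fst p a = true /\ ~ I (single a))) \/
       ((forall a, fst p a = true -> I (single a)) /\ out _ Cond2 p k = true))).
    { intros p. unfold F2. rewrite dec_true. tauto. }
    assert (ho : sigma_gen cantor_pair_gen (fun p : Pt => out _ Cond2 p k = true)).
    { apply (borel_out Pt Cond2 cantor_pair_gen _ pair_A0 meas_cond2
        (fun x => x k = true)). apply sg_base. exists k; reflexivity. }
    repeat (meas_step || apply pair_atom1 || apply pair_atom2 || apply ho || (eapply meas_const; apply pair_A0)).
  - intros x s hx hs.
    destruct (classic (exists a, x a = true /\ ~ I (single a))) as [hA|hA].
    + destruct (ex_least _ hA) as [a0 [[ha1 ha2] hmin]].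
      assert (e : forall k, F2 (x, s) k = true <-> k = a0).
      { intros k. unfold F2. rewrite dec_true. simpl. split.
        - intros [[h1 [h2 h3]]|[h1 _]].
          + destruct (lt_eq_lt_dec k a0) as [[l|l]|l]; auto.
            * exfalso. apply (hmin k l). auto.
            * exfalso. apply (h3 a0 l). auto.
          + exfalso. apply ha2. auto.
        - intros ->. left. split; auto. }
      split; [|split].
      * intros k hk. apply e in hk. subst; auto.
      * apply (pos_transfer (single a0)); auto. intros k hk. apply e. apply Nat.eqb_eq. exact hk.
      * intros n a b h1 _ h2 _. apply e in h1. apply e in h2. congruence.
    + assert (hs1 : forall a, x a = true -> I (single a)).
      { intros a h. apply NNPP. intros h'. apply hA; eauto. }
      assert (e : forall k, F2 (x, s) k = true <-> out _ Cond2 (x, s) k = true).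
      { intros k. unfold F2. rewrite dec_true. simpl. split.
        - intros [[h1 [h2 _]]|[_ h]]; auto.
        - intros h. right. auto. }
      assert (Hpc : forall i, Cond2 i (x, s) (stage _ Cond2 (x, s) i) (choose _ Cond2 i (x, s) (stage _ Cond2 (x, s) i))).
      { apply piece_cond. intros j u. simpl.
        set (W := fun k => dec (exists n, (exists i, Nat.testbit u i = true /\ s n i = true) /\ s n k = true)).
        set (z := fun k => x k && negb (W k)).
        destruct (piece_bound x s hs (S (Nat.log2 u))) as [B hB].
        assert (hz : ~ I z).
        { intros hz. apply (pos_minus x z (fun k => x k && W k)); auto.
          - intros k hk. unfold z. rewrite hk. simpl. destruct (W k); auto.
          - assert (h0 : I (fun _ => false)). { apply (Hher _ _ hz). intros k h; discriminate. }
            apply (fin_I x hs1 h0 B).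
            + intros k hk. apply andb_prop in hk; tauto.
            + intros k hk. apply andb_prop in hk. destruct hk as [_ hk]. unfold W in hk. rewrite dec_true in hk.
              destruct hk as [n [[i [h1 h2]] h3]]. apply (hB i n k); auto. apply setc_bound; auto. }
        destruct hs as [hf [hd hcov]].
        set (s' := fun n k => s n k && z k).
        assert (hp' : finite_partition z s').
        { split; [|split].
          - intros n. destruct (hf n) as [b hb]. exists b. intros k hk. apply andb_prop in hk. apply hb; tauto.
          - intros n m k hnm h1 h2. apply andb_prop in h1, h2. destruct h1 as [h1 _], h2 as [h2 _]. exact (hd n m k hnm h1 h2).
          - intros k. split.
            + intros hk. assert (x k = true). { unfold z in hk. apply andb_prop in hk; tauto. }
              apply hcov in H. destruct H as [n hn]. exists n. unfold s'. rewrite hn, hk. auto.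
            + intros [n hn]. apply andb_prop in hn; tauto. }
        destruct (Hq z s' hz hp') as [y' [hy1 [hy2 hy3]]].
        destruct (bad_code I Cs Hcl HIC Hher y' hy2 j) as [c [hc1 hc2]].
        assert (inz : forall k, Nat.testbit c k = true -> x k = true /\ W k = false).
        { intros k hk. specialize (hy1 k (hc2 k hk)). unfold z in hy1. apply andb_prop in hy1.
          destruct hy1 as [h1 h2]. split; auto. destruct (W k); auto. }
        exists c. split; [|split; [|split]]; simpl; auto.
        - intros k hk. apply inz; auto.
        - intros n a b ha h1 hb h2. apply (hy3 n); auto.
          + unfold s'. rewrite h1. simpl. apply hy1, hc2, ha.
          + unfold s'. rewrite h2. simpl. apply hy1, hc2, hb.
        - intros n hn k hk h. destruct (inz k hk) as [_ hw].
          assert (W k = true). { unfold W. apply dec_true. eauto. } congruence. }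
      split; [|split].
      * intros k hk. apply e in hk. apply out_iff in hk. destruct hk as [i hi]. apply (Hpc i); auto.
      * apply (pos_transfer (out _ Cond2 (x, s))).
        -- apply (pos_of_pieces I Cs HIC _ (piece _ Cond2 (x, s))).
           ++ intros j k hk. apply out_iff. eauto.
           ++ intros j. apply Hpc.
        -- intros k hk. apply e; auto.
      * intros n a b ha h1 hb h2. apply e in ha, hb. apply out_iff in ha, hb.
        destruct ha as [i hi], hb as [j hj].
        destruct (lt_eq_lt_dec i j) as [[l|l]|l].
        -- exfalso. destruct (Hpc j) as [_ [_ [h _]]]. apply (h n) with b; auto.
           exists a. split; auto. apply stage_bits. eauto.
        -- subst. destruct (Hpc j) as [_ [h _]]. apply (h n); auto.
        -- exfalso. destruct (Hpc i) as [_ [_ [h _]]]. apply (h n) with a; auto.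
           exists b. split; auto. apply stage_bits. eauto.
Qed.
End Main.

Theorem mainTheorem9 (I : cantor -> Prop) (HI : is_ideal I) (HF : F_sigma I) :
  uniformly_pplus I /\
  (qplus I -> uniformly_qplus I) /\
  (selective I -> uniformly_selective I).
Proof.
  destruct HI as [Hher Hun]. destruct HF as [Cs [Hcl HIC]].
  split; [|split].
  - exact (part1 I Cs Hcl HIC Hher).
  - exact (part2 I Cs Hcl HIC Hher Hun).
  - exact (part3 I Cs Hcl HIC Hher Hun).
Qed.
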